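(* Let $\{n_k\}_{k\ge1}\subset\mathbb{Z}^+$ and $\{c_k\}_{k\ge1}\subset\mathbb{R}^+$ satisfy $n_k\ge 2$ and $n_kc_k<1$ for all $k\ge1$, let $I\subset\mathbb{R}$ be a nonempty closed interval, and let $E\in\mathcal{M}(I,\{n_k\},\{c_k\})$ be a homogeneous Moran set. If $\sup_{k\ge1}n_k<+\infty$, then $$\dim_A E=\limsup_{l\to+\infty}\ \sup_{k\ge1}\ \frac{\log (n_{k+1}\cdots n_{k+l})}{-\log (c_{k+1}\cdots c_{k+l})}.$$
   Context: Words: $\Omega_0=\{\emptyset\}$, $\Omega_k=\{\sigma_1\cdots\sigma_k:1\le\sigma_j\le n_j\}$, $\Omega=\bigcup_{k\ge0}\Omega_k$; for $\sigma\in\Omega_{k-1}$ and $1\le i\le n_k$, $\sigma*i\in\Omega_k$ denotes concatenation. A collection $\{I_\sigma:\sigma\in\Omega\}$ of closed intervals is a homogeneous Moran structure if $I_\emptyset=I$; for each $k\ge1$ and $\sigma\in\Omega_{k-1}$, the intervals $I_{\sigma*1},\dots,I_{\sigma*n_k}$ are contained in $I_\sigma$ and have pairwise disjoint interiors; and $|I_{\sigma*i}|/|I_\sigma|=c_k$ for all such $\sigma,i$ ($|\cdot|$ = diameter). The set $E=\bigcap_{k\ge1}\bigcup_{\sigma\in\Omega_k}I_\sigma$ is a homogeneous Moran set, and $\mathcal{M}(I,\{n_k\},\{c_k\})$ is the class of all such sets. For $F\subset\mathbb{R}$, $N_r(A)$ is the smallest number of balls of radius $r$ covering $A$, and the Assouad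 dimension is $\dim_A F=\inf\{s\ge0:\exists\, b,c>0\ \forall\, 0<r<R<b,\ \forall x\in F,\ N_r(B(x,R)\cap F)\le c(R/r)^s\}$. *)

(* Defs.v *)
From Stdlib Require Import Reals List.
From Coquelicot Require Import Coquelicot.
Import ListNotations.
Open Scope R_scope.

Definition cball (x r : R) : R -> Prop := fun y => Rabs (y - x) <= r.

(** N_r(A): the smallest number of balls of radius r covering A
    (+oo if no finite cover exists). *)
Definition covered_by (r : R) (A : R -> Prop) (cs : list R) : Prop :=
  forall y, A y -> exists z, In z cs /\ cball z r y.

Definition covering_number (r : R) (A : R -> Prop) : Rbar :=
  Glb_Rbar (fun m => exists cs : list R, covered_by r A cs /\ m = INR (length cs)).

Definition assouad_dim (F : R -> Prop) : Rbar :=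
  Glb_Rbar (fun s => 0 <= s /\
    exists b c : R, 0 < b /\ 0 < c /\
      forall (r R0 x : R), 0 < r -> r < R0 -> R0 < b -> F x ->
        Rbar_le (covering_number r (fun y => cball x R0 y /\ F y))
                (Finite (c * Rpower (R0 / r) s))).

(** Words: sigma = sigma_1 ... sigma_k is the list [sigma_1; ...; sigma_k],
    with 1 <= sigma_j <= n_j; sigma * i = sigma ++ [i]. *)
Definition word_in (n : nat -> nat) (k : nat) (w : list nat) : Prop :=
  length w = k /\
  forall j, (j < k)%nat -> (1 <= nth j w 0%nat <= n (S j))%nat.

(** A homogeneous Moran structure: I_sigma = [lo sigma, hi sigma]. *)
Definition homogeneous_moran_structure (a b : R) (n : nat -> nat) (c : nat -> R)
    (lo hi : list nat -> R) : Prop :=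
  (forall w, lo w <= hi w) /\
  lo [] = a /\ hi [] = b /\
  (forall k w, (1 <= k)%nat -> word_in n (k - 1) w ->
     (forall i, (1 <= i <= n k)%nat ->
        lo w <= lo (w ++ [i]) /\ hi (w ++ [i]) <= hi w /\
        hi (w ++ [i]) - lo (w ++ [i]) = c k * (hi w - lo w)) /\
     (forall i j, (1 <= i <= n k)%nat -> (1 <= j <= n k)%nat -> i <> j ->
        ~ (exists x, lo (w ++ [i]) < x < hi (w ++ [i]) /\
                     lo (w ++ [j]) < x < hi (w ++ [j])))).

Definition moran_set (n : nat -> nat) (lo hi : list nat -> R) : R -> Prop :=
  fun x => forall k, (1 <= k)%nat ->
    exists w, word_in n k w /\ lo w <= x <= hi w.

Definition in_moran_class (a b : R) (n : nat -> nat) (c : nat -> R)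
    (E : R -> Prop) : Prop :=
  exists lo hi, homogeneous_moran_structure a b n c lo hi /\
    forall x, E x <-> moran_set n lo hi x.

Fixpoint prod_n (n : nat -> nat) (k l : nat) : nat :=
  match l with O => 1%nat | S l' => (prod_n n k l' * n (k + l))%nat end.
Fixpoint prod_c (c : nat -> R) (k l : nat) : R :=
  match l with O => 1 | S l' => prod_c c k l' * c (k + l)%nat end.

Definition ratio (n : nat -> nat) (c : nat -> R) (k l : nat) : R :=
  ln (INR (prod_n n k l)) / (- ln (prod_c c k l)).

(** limsup_{l -> oo} sup_{k >= 1} ratio k l  (limsup of an Rbar sequence
    = inf_L sup_{l >= L}). *)
Definition moran_formula (n : nat -> nat) (c : nat -> R) : Rbar :=
  Inf_seq (fun L => Sup_seq (fun m =>
    Sup_seq (fun j => Finite (ratio n c (S j) (L + m)%nat)))).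

(* Main.v *)
Require Import Defs.
From Stdlib Require Import Reals List Lra Lia Classical ClassicalEpsilon.
From Coquelicot Require Import Coquelicot.
Import ListNotations.
Open Scope R_scope.

Lemma word_in_snoc n k w i :
  word_in n (S k) (w ++ [i]) <-> word_in n k w /\ (1 <= i <= n (S k))%nat.
Proof.
  unfold word_in; rewrite length_app; simpl. split.
  - intros [Hl Hj]. assert (length w = k) by lia. subst k. split; [split|].
    + reflexivity.
    + intros j Hj'. specialize (Hj j ltac:(lia)). rewrite app_nth1 in Hj by lia. exact Hj.
    + specialize (Hj (length w) ltac:(lia)). rewrite nth_middle in Hj. exact Hj.
  - intros [[Hl Hj] Hi]. subst k. split; [lia|]. intros j Hj'.
    destruct (Nat.eq_dec j (length w)) as [->|Hne].
    + rewrite nth_middle. exact Hi.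
    + rewrite app_nth1 by lia. apply Hj. lia.
Qed.

Lemma word_in_last n k w : word_in n (S k) w ->
  exists w' i, w = w' ++ [i] /\ word_in n k w' /\ (1 <= i <= n (S k))%nat.
Proof.
  intros H. destruct w as [|x w0] using rev_ind.
  - destruct H as [H _]; simpl in H; discriminate.
  - exists w0, x. split; [reflexivity|]. apply word_in_snoc; exact H.
Qed.

Lemma word_in_nil n : word_in n 0 [].
Proof. split; [reflexivity| intros; lia]. Qed.

Lemma word_in_0 n w : word_in n 0 w -> w = [].
Proof. intros [H _]. destruct w; [reflexivity|discriminate]. Qed.

Lemma word_in_len n k w : word_in n k w -> length w = k.
Proof. intros [H _]; exact H. Qed.

Lemma word_in_firstn n k j w : word_in n (k + j) w -> word_in n k (firstn k w).
Proof.
  intros [Hl Hj]. split.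
  - rewrite length_firstn. lia.
  - intros t Ht. rewrite nth_firstn. destruct (Nat.ltb_spec t k); [|lia]. simpl. apply Hj. lia.
Qed.

Lemma prod_c_split c k d l : prod_c c k (d + l) = prod_c c k d * prod_c c (k + d) l.
Proof.
  induction l as [|l IH]; simpl.
  - rewrite Nat.add_0_r; ring.
  - replace (d + S l)%nat with (S (d + l)) by lia. simpl. rewrite IH.
    replace (k + S (d + l))%nat with (k + d + S l)%nat by lia. ring.
Qed.

Lemma prod_n_split n k d l : prod_n n k (d + l) = (prod_n n k d * prod_n n (k + d) l)%nat.
Proof.
  induction l as [|l IH]; simpl.
  - rewrite Nat.add_0_r; lia.
  - replace (d + S l)%nat with (S (d + l)) by lia. simpl. rewrite IH.
    replace (k + S (d + l))%nat with (k + d + S l)%nat by lia. lia.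
Qed.

Lemma prod_c_pos c k l : (forall k, (1 <= k)%nat -> 0 < c k) -> 0 < prod_c c k l.
Proof.
  intros Hc. induction l as [|l IH]; simpl; [lra|].
  apply Rmult_lt_0_compat; [exact IH| apply Hc; lia].
Qed.

Lemma prod_c_le c k l : (forall k, (1 <= k)%nat -> 0 < c k <= /2) -> prod_c c k l <= (/2)^l.
Proof.
  intros Hc. induction l as [|l IH]; simpl; [lra|].
  assert (0 < prod_c c k l) by (apply prod_c_pos; intros; apply Hc; lia).
  specialize (Hc (k + S l)%nat ltac:(lia)).
  rewrite Rmult_comm. apply Rmult_le_compat; lra.
Qed.

Lemma prod_c_le1 c k l : (forall k, (1 <= k)%nat -> 0 < c k <= /2) -> prod_c c k l <= 1.
Proof.
  intros Hc. induction l as [|l IH]; simpl; [lra|].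
  assert (0 < prod_c c k l) by (apply prod_c_pos; intros; apply Hc; lia).
  specialize (Hc (k + S l)%nat ltac:(lia)).
  replace 1 with (1 * 1) by ring. apply Rmult_le_compat; lra.
Qed.

Lemma prod_n_le n M k l : (forall k, (1 <= k)%nat -> (n k <= M)%nat) -> (prod_n n k l <= M ^ l)%nat.
Proof.
  intros Hn. induction l as [|l IH]; simpl; [lia|].
  specialize (Hn (k + S l)%nat ltac:(lia)). rewrite Nat.mul_comm. apply Nat.mul_le_mono; lia.
Qed.

Lemma prod_n_ge1 n k l : (forall k, (1 <= k)%nat -> (2 <= n k)%nat) -> (1 <= prod_n n k l)%nat.
Proof.
  intros Hn. induction l as [|l IH]; simpl; [lia|].
  specialize (Hn (k + S l)%nat ltac:(lia)). nia.
Qed.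

Lemma hm_child a b n c lo hi k w i :
  homogeneous_moran_structure a b n c lo hi -> word_in n k w -> (1 <= i <= n (S k))%nat ->
  lo w <= lo (w ++ [i]) /\ hi (w ++ [i]) <= hi w /\
  hi (w ++ [i]) - lo (w ++ [i]) = c (S k) * (hi w - lo w).
Proof.
  intros (_ & _ & _ & Hch) Hw Hi.
  assert (Hw' : word_in n (S k - 1) w) by (replace (S k - 1)%nat with k by lia; exact Hw).
  destruct (Hch (S k) w ltac:(lia) Hw') as [H1 _]. apply H1; exact Hi.
Qed.

Lemma hm_disj a b n c lo hi k w i j :
  homogeneous_moran_structure a b n c lo hi -> word_in n k w -> (1 <= i <= n (S k))%nat ->
  (1 <= j <= n (S k))%nat -> i <> j ->
  ~ (exists x, lo (w ++ [i]) < x < hi (w ++ [i]) /\ lo (w ++ [j]) < x < hi (w ++ [j])).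
Proof.
  intros (_ & _ & _ & Hch) Hw Hi Hj Hij.
  assert (Hw' : word_in n (S k - 1) w) by (replace (S k - 1)%nat with k by lia; exact Hw).
  destruct (Hch (S k) w ltac:(lia) Hw') as [_ H2]. apply H2; assumption.
Qed.

Lemma hm_len a b n c lo hi k w :
  homogeneous_moran_structure a b n c lo hi -> word_in n k w ->
  hi w - lo w = (b - a) * prod_c c 0 k.
Proof.
  intros H. revert w. induction k as [|k IH]; intros w Hw.
  - apply word_in_0 in Hw. subst w. destruct H as (_ & H1 & H2 & _). simpl. rewrite H1, H2. ring.
  - destruct (word_in_last _ _ _ Hw) as (w' & i & -> & Hw' & Hi).
    destruct (hm_child _ _ _ _ _ _ _ _ _ H Hw' Hi) as (_ & _ & E).
    rewrite E, (IH w' Hw'). simpl. ring.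
Qed.

Lemma hm_nest a b n c lo hi j k w :
  homogeneous_moran_structure a b n c lo hi -> word_in n (k + j) w ->
  lo (firstn k w) <= lo w /\ hi w <= hi (firstn k w).
Proof.
  intros H. revert w. induction j as [|j IH]; intros w Hw.
  - rewrite firstn_all2 by (rewrite (word_in_len _ _ _ Hw); lia). lra.
  - rewrite Nat.add_succ_r in Hw.
    destruct (word_in_last _ _ _ Hw) as (w' & i & -> & Hw' & Hi).
    destruct (hm_child _ _ _ _ _ _ _ _ _ H Hw' Hi) as (E1 & E2 & _).
    rewrite firstn_app. rewrite (word_in_len _ _ _ Hw').
    replace (k - (k + j))%nat with 0%nat by lia. simpl. rewrite app_nil_r.
    destruct (IH w' Hw'). lra.
Qed.

Lemma sep_of_nointer lo1 hi1 lo2 hi2 : lo1 < hi1 -> lo2 < hi2 ->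
  ~ (exists x, lo1 < x < hi1 /\ lo2 < x < hi2) -> hi1 <= lo2 \/ hi2 <= lo1.
Proof.
  intros H1 H2 H. destruct (Rle_dec hi1 lo2); [left; exact r|].
  destruct (Rle_dec hi2 lo1); [right; exact r|]. exfalso; apply H.
  destruct (Rle_dec lo1 lo2); destruct (Rle_dec hi1 hi2).
  - exists ((lo2 + hi1)/2); lra.
  - exists ((lo2 + hi2)/2); lra.
  - exists ((lo1 + hi1)/2); lra.
  - exists ((lo1 + hi2)/2); lra.
Qed.

Lemma hm_pos a b n c lo hi k w :
  homogeneous_moran_structure a b n c lo hi -> a < b -> (forall k, (1 <= k)%nat -> 0 < c k) ->
  word_in n k w -> lo w < hi w.
Proof.
  intros H Hab Hc Hw. pose proof (hm_len _ _ _ _ _ _ _ _ H Hw).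
  pose proof (prod_c_pos c 0 k Hc). assert (0 < (b - a) * prod_c c 0 k) by (apply Rmult_lt_0_compat; lra).
  lra.
Qed.

Lemma hm_sep a b n c lo hi k w w' :
  homogeneous_moran_structure a b n c lo hi -> a < b -> (forall k, (1 <= k)%nat -> 0 < c k) ->
  word_in n k w -> word_in n k w' -> w <> w' -> hi w <= lo w' \/ hi w' <= lo w.
Proof.
  intros H Hab Hc. revert w w'. induction k as [|k IH]; intros w w' Hw Hw' Hne.
  - apply word_in_0 in Hw. apply word_in_0 in Hw'. subst; congruence.
  - destruct (word_in_last _ _ _ Hw) as (u & i & -> & Hu & Hi).
    destruct (word_in_last _ _ _ Hw') as (u' & i' & -> & Hu' & Hi').
    destruct (list_eq_dec Nat.eq_dec u u') as [<-|Hne'].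
    + assert (i <> i') by (intro; subst; congruence).
      apply sep_of_nointer.
      * eapply hm_pos; eauto.
      * eapply hm_pos; eauto.
      * eapply hm_disj; eauto.
    + destruct (hm_child _ _ _ _ _ _ _ _ _ H Hu Hi) as (E1 & E2 & _).
      destruct (hm_child _ _ _ _ _ _ _ _ _ H Hu' Hi') as (E3 & E4 & _).
      destruct (IH u u' Hu Hu' Hne'); lra.
Qed.

Fixpoint ext (n : nat -> nat) (u : list nat) (k j : nat) : list (list nat) :=
  match j with
  | O => [u]
  | S j' => flat_map (fun w => map (fun i => w ++ [i]) (seq 1 (n (S (k + j'))))) (ext n u k j')
  end.

Lemma flat_map_len_const {A B} (f : A -> list B) (l : list A) m :
  (forall x, In x l -> length (f x) = m) -> length (flat_map f l) = (length l * m)%nat.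
Proof.
  induction l as [|x l IH]; intros H; simpl; [reflexivity|].
  rewrite length_app, H by (left; reflexivity). rewrite IH by (intros; apply H; right; assumption). lia.
Qed.

Lemma NoDup_flat_map {A B} (f : A -> list B) (l : list A) :
  NoDup l -> (forall x, In x l -> NoDup (f x)) ->
  (forall x y z, In x l -> In y l -> x <> y -> In z (f x) -> In z (f y) -> False) ->
  NoDup (flat_map f l).
Proof.
  induction l as [|x l IH]; intros Hl Hf Hd; simpl; [constructor|].
  inversion Hl; subst. apply NoDup_app.
  - apply Hf; left; reflexivity.
  - apply IH; auto.
    + intros; apply Hf; right; assumption.
    + intros x0 y z Hx Hy; apply Hd; right; assumption.
  - intros z Hz Hz'. apply in_flat_map in Hz' as (y & Hy & Hz').
    eapply (Hd x y z); [left; reflexivity|right; exact Hy| |exact Hz|exact Hz'].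
    intro; subst; contradiction.
Qed.

Lemma ext_len n u k j : length (ext n u k j) = prod_n n k j.
Proof.
  induction j as [|j IH]; simpl; [reflexivity|].
  rewrite (flat_map_len_const _ _ (n (S (k + j)))).
  - rewrite IH. replace (k + S j)%nat with (S (k + j)) by lia. reflexivity.
  - intros; rewrite length_map, length_seq; reflexivity.
Qed.

Lemma ext_sound n u k j w : word_in n k u -> In w (ext n u k j) ->
  word_in n (k + j) w /\ firstn k w = u.
Proof.
  intros Hu. revert w. induction j as [|j IH]; intros w Hw; simpl in Hw.
  - destruct Hw as [<-|[]]. rewrite Nat.add_0_r. split; [exact Hu|].
    apply firstn_all2. rewrite (word_in_len _ _ _ Hu); lia.
  - apply in_flat_map in Hw as (w' & Hw' & Hw). apply in_map_iff in Hw as (i & <- & Hi).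
    apply in_seq in Hi. destruct (IH w' Hw') as [H1 H2]. split.
    + rewrite Nat.add_succ_r. apply word_in_snoc. split; [exact H1|lia].
    + rewrite firstn_app, (word_in_len _ _ _ H1). replace (k - (k + j))%nat with 0%nat by lia.
      simpl. rewrite app_nil_r. exact H2.
Qed.

Lemma ext_complete n k j w : word_in n (k + j) w -> In w (ext n (firstn k w) k j).
Proof.
  revert w. induction j as [|j IH]; intros w Hw; simpl.
  - left. apply firstn_all2. rewrite (word_in_len _ _ _ Hw); lia.
  - rewrite Nat.add_succ_r in Hw. destruct (word_in_last _ _ _ Hw) as (w' & i & -> & Hw' & Hi).
    apply in_flat_map. exists w'. split.
    + rewrite firstn_app, (word_in_len _ _ _ Hw'). replace (k - (k + j))%nat with 0%nat by lia.
      simpl. rewrite app_nil_r. apply IH; exact Hw'.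
    + apply in_map_iff. exists i. split; [reflexivity|]. apply in_seq. lia.
Qed.

Lemma ext_nodup n u k j : NoDup (ext n u k j).
Proof.
  induction j as [|j IH]; simpl.
  - constructor; [intros []|constructor].
  - apply NoDup_flat_map; [exact IH| |].
    + intros w _. apply NoDup_map_inv with (f := fun l => last l 0%nat).
      rewrite map_map, (map_ext _ (fun i => i)); [rewrite map_id; apply seq_NoDup|]. intros i; apply last_last.
    + intros x y z _ _ Hxy Hx Hy. apply in_map_iff in Hx as (i & <- & _).
      apply in_map_iff in Hy as (i' & Heq & _). apply app_inj_tail in Heq as [-> _]. congruence.
Qed.

Lemma repeat_snoc {A} (x : A) m : repeat x (S m) = repeat x m ++ [x].
Proof. induction m as [|m IH]; simpl; [reflexivity|]. simpl in IH; rewrite IH; reflexivity. Qed.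

Lemma chain_word n k w m : (forall k, (1 <= k)%nat -> (2 <= n k)%nat) ->
  word_in n k w -> word_in n (k + m) (w ++ repeat 1%nat m).
Proof.
  intros Hn Hw. induction m as [|m IH].
  - simpl. rewrite app_nil_r, Nat.add_0_r. exact Hw.
  - rewrite repeat_snoc, app_assoc, Nat.add_succ_r. apply word_in_snoc. split; [exact IH|].
    specialize (Hn (S (k + m)) ltac:(lia)). lia.
Qed.

Lemma chain_mono a b n c lo hi k w m d :
  homogeneous_moran_structure a b n c lo hi -> (forall k, (1 <= k)%nat -> (2 <= n k)%nat) ->
  word_in n k w ->
  lo (w ++ repeat 1%nat m) <= lo (w ++ repeat 1%nat (m + d)) /\
  hi (w ++ repeat 1%nat (m + d)) <= hi (w ++ repeat 1%nat m).
Proof.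
  intros H Hn Hw. induction d as [|d IH].
  - rewrite Nat.add_0_r. lra.
  - rewrite Nat.add_succ_r, repeat_snoc, app_assoc.
    assert (Hi : (1 <= 1 <= n (S (k + (m + d))))%nat) by (specialize (Hn (S (k + (m + d)))); lia).
    destruct (hm_child _ _ _ _ _ _ _ _ _ H (chain_word _ _ _ (m + d) Hn Hw) Hi) as (E1 & E2 & _).
    lra.
Qed.

Lemma hm_point a b n c lo hi k w :
  homogeneous_moran_structure a b n c lo hi -> (forall k, (1 <= k)%nat -> (2 <= n k)%nat) ->
  word_in n k w -> exists y, moran_set n lo hi y /\ lo w <= y <= hi w.
Proof.
  intros H Hn Hw.
  set (S0 := fun y => exists m, y = lo (w ++ repeat 1%nat m)).
  assert (Hcross : forall m m', lo (w ++ repeat 1%nat m) <= hi (w ++ repeat 1%nat m')).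
  { intros m m'. destruct (chain_mono _ _ _ _ _ _ _ _ m (Nat.max m m' - m) H Hn Hw) as [E1 _].
    destruct (chain_mono _ _ _ _ _ _ _ _ m' (Nat.max m m' - m') H Hn Hw) as [_ E2].
    replace (m + (Nat.max m m' - m))%nat with (Nat.max m m') in E1 by lia.
    replace (m' + (Nat.max m m' - m'))%nat with (Nat.max m m') in E2 by lia.
    destruct H as (Hle & _). specialize (Hle (w ++ repeat 1%nat (Nat.max m m'))). lra. }
  assert (Hb : bound S0). { exists (hi (w ++ repeat 1%nat 0)). intros y [m ->]. apply Hcross. }
  assert (Hne : exists y, S0 y) by (exists (lo (w ++ repeat 1%nat 0)); exists 0%nat; reflexivity).
  destruct (completeness S0 Hb Hne) as [y [Hub Hlub]].
  assert (Hy : forall m, lo (w ++ repeat 1%nat m) <= y <= hi (w ++ repeat 1%nat m)).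
  { intros m. split.
    - apply Hub. exists m; reflexivity.
    - apply Hlub. intros z [m' ->]. apply Hcross. }
  exists y. split.
  - intros k' Hk'. destruct (Nat.le_gt_cases k' k) as [Hle|Hgt].
    + exists (firstn k' w). split.
      * apply (word_in_firstn n k' (k - k')). replace (k' + (k - k'))%nat with k by lia. exact Hw.
      * assert (Hw2 : word_in n (k' + (k - k')) w) by (replace (k' + (k - k'))%nat with k by lia; exact Hw).
        destruct (hm_nest _ _ _ _ _ _ _ _ _ H Hw2). specialize (Hy 0%nat). simpl in Hy.
        rewrite app_nil_r in Hy. lra.
    + exists (w ++ repeat 1%nat (k' - k)). split.
      * replace k' with (k + (k' - k))%nat at 1 by lia. apply chain_word; assumption.
      * apply Hy.
  - specialize (Hy 0%nat). simpl in Hy. rewrite app_nil_r in Hy. exact Hy.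
Qed.

Lemma len_le2 {A} (Q : list A) : NoDup Q ->
  (forall v1 v2 v3, In v1 Q -> In v2 Q -> In v3 Q -> v1 <> v2 -> v1 <> v3 -> v2 <> v3 -> False) ->
  (length Q <= 2)%nat.
Proof.
  intros HQ H. destruct Q as [|v1 [|v2 [|v3 Q]]]; simpl; try lia. exfalso.
  inversion HQ as [|? ? H1 HQ2]; subst. inversion HQ2 as [|? ? H2 _]; subst.
  apply (H v1 v2 v3); simpl; auto; intro; subst; simpl in *; tauto.
Qed.

Lemma len_le3 {A} (Q : list A) : NoDup Q ->
  (forall v1 v2 v3 v4, In v1 Q -> In v2 Q -> In v3 Q -> In v4 Q -> v1 <> v2 -> v1 <> v3 -> v1 <> v4 ->
     v2 <> v3 -> v2 <> v4 -> v3 <> v4 -> False) ->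
  (length Q <= 3)%nat.
Proof.
  intros HQ H. destruct Q as [|v1 [|v2 [|v3 [|v4 Q]]]]; simpl; try lia. exfalso.
  inversion HQ as [|? ? H1 HQ2]; subst. inversion HQ2 as [|? ? H2 HQ3]; subst.
  inversion HQ3 as [|? ? H3 _]; subst.
  apply (H v1 v2 v3 v4); simpl; auto 6; intro; subst; simpl in *; tauto.
Qed.

Lemma pigeon2 {A B} (Rel : B -> A -> Prop) (cs : list B) : forall (P : list A),
  NoDup P -> (forall v, In v P -> exists z, In z cs /\ Rel z v) ->
  (forall z v1 v2 v3, In v1 P -> In v2 P -> In v3 P -> Rel z v1 -> Rel z v2 -> Rel z v3 ->
     v1 <> v2 -> v1 <> v3 -> v2 <> v3 -> False) ->
  (length P <= 2 * length cs)%nat.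
Proof.
  induction cs as [|z0 cs IH]; intros P HP Hcov H3.
  - destruct P as [|v P]; simpl; [lia|]. destruct (Hcov v (or_introl eq_refl)) as (z & [] & _).
  - set (f := fun v => if excluded_middle_informative (Rel z0 v) then true else false).
    rewrite <- (filter_length f P).
    assert (HQ : (length (filter f P) <= 2)%nat).
    { apply len_le2; [apply NoDup_filter; exact HP|].
      intros v1 v2 v3 I1 I2 I3. apply filter_In in I1 as [I1 F1]. apply filter_In in I2 as [I2 F2].
      apply filter_In in I3 as [I3 F3]. unfold f in *.
      destruct (excluded_middle_informative (Rel z0 v1)); [|discriminate].
      destruct (excluded_middle_informative (Rel z0 v2)); [|discriminate].
      destruct (excluded_middle_informative (Rel z0 v3)); [|discriminate].
      eapply H3; eauto. }
    assert (HP' : (length (filter (fun x => negb (f x)) P) <= 2 * length cs)%nat).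
    { apply IH.
      - apply NoDup_filter; exact HP.
      - intros v Hv. apply filter_In in Hv as [Hv Fv]. unfold f in Fv.
        destruct (excluded_middle_informative (Rel z0 v)) as [|Hn]; [discriminate|].
        destruct (Hcov v Hv) as (z & [<-|Hz] & Rz); [contradiction|]. exists z; auto.
      - intros z v1 v2 v3 I1 I2 I3. apply filter_In in I1 as [I1 _]. apply filter_In in I2 as [I2 _].
        apply filter_In in I3 as [I3 _]. eapply H3; eauto. }
    simpl. lia.
Qed.

Lemma sup_ub (u : nat -> Rbar) k : Rbar_le (u k) (Sup_seq u).
Proof.
  rewrite Rbar_sup_eq_lub. unfold Rbar_lub. destruct (Rbar_ex_lub _) as [l [Hl Hl2]]. simpl.
  apply Hl. exists k; reflexivity.
Qed.

Lemma sup_lub (u : nat -> Rbar) M : (forall k, Rbar_le (u k) M) -> Rbar_le (Sup_seq u) M.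
Proof.
  intros H. rewrite Rbar_sup_eq_lub. unfold Rbar_lub. destruct (Rbar_ex_lub _) as [l [Hl2 Hl]]. simpl.
  apply Hl. intros x [k ->]. apply H.
Qed.

Lemma inf_lb (u : nat -> Rbar) k : Rbar_le (Inf_seq u) (u k).
Proof.
  rewrite Inf_eq_glb. unfold Rbar_glb. destruct (Rbar_ex_glb _) as [l [Hl Hl2]]. simpl.
  apply Hl. exists k; reflexivity.
Qed.

Lemma inf_glb (u : nat -> Rbar) M : (forall k, Rbar_le M (u k)) -> Rbar_le M (Inf_seq u).
Proof.
  intros H. rewrite Inf_eq_glb. unfold Rbar_glb. destruct (Rbar_ex_glb _) as [l [Hl2 Hl]]. simpl.
  apply Hl. intros x [k ->]. apply H.
Qed.

Lemma cball_iff x r y : cball x r y <-> x - r <= y <= x + r.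
Proof.
  unfold cball. unfold Rabs. destruct (Rcase_abs (y - x)); split; intros; lra.
Qed.

Lemma c_bound n c : (forall k, (1 <= k)%nat -> (2 <= n k)%nat) -> (forall k, (1 <= k)%nat -> 0 < c k) ->
  (forall k, (1 <= k)%nat -> INR (n k) * c k < 1) -> forall k, (1 <= k)%nat -> 0 < c k <= /2.
Proof.
  intros Hn Hc Hnc k Hk. specialize (Hn k Hk). specialize (Hc k Hk). specialize (Hnc k Hk).
  apply le_INR in Hn. simpl in Hn. split; [lra|]. nra.
Qed.

Definition delta a b c k := (b - a) * prod_c c 0 k.

Lemma delta_add a b c k l : delta a b c (k + l) = delta a b c k * prod_c c k l.
Proof. unfold delta. rewrite (prod_c_split c 0 k l). simpl. ring. Qed.

Lemma delta_pos a b c k : a < b -> (forall k, (1 <= k)%nat -> 0 < c k) -> 0 < delta a b c k.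
Proof. intros. unfold delta. apply Rmult_lt_0_compat; [lra| apply prod_c_pos; assumption]. Qed.

Lemma delta_le a b c k l : a < b -> (forall k, (1 <= k)%nat -> 0 < c k <= /2) ->
  delta a b c (k + l) <= delta a b c k.
Proof.
  intros Hab Hc. rewrite delta_add. pose proof (prod_c_le1 c k l Hc).
  assert (0 < delta a b c k) by (apply delta_pos; [lra| intros; apply Hc; assumption]).
  pose proof (prod_c_pos c k l ltac:(intros; apply Hc; assumption)). nra.
Qed.

Lemma delta_le_pow a b c k : a < b -> (forall k, (1 <= k)%nat -> 0 < c k <= /2) ->
  delta a b c k <= (b - a) * (/2) ^ k.
Proof.
  intros Hab Hc. unfold delta. apply Rmult_le_compat_l; [lra|]. apply prod_c_le; exact Hc.
Qed.

Lemma cover_lower a b n c lo hi (E : R -> Prop) k l sg x r cs :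
  homogeneous_moran_structure a b n c lo hi -> a < b ->
  (forall k, (1 <= k)%nat -> (2 <= n k)%nat) -> (forall k, (1 <= k)%nat -> 0 < c k) ->
  (forall x, E x <-> moran_set n lo hi x) ->
  word_in n k sg -> lo sg <= x <= hi sg -> 3 * r = delta a b c (k + l) ->
  covered_by r (fun y => cball x (delta a b c k) y /\ E y) cs ->
  (prod_n n k l <= 2 * length cs)%nat.
Proof.
  intros H Hab Hn Hc HE Hsg Hx Hr Hcov.
  rewrite <- (ext_len n sg k l).
  apply (pigeon2 (fun z v => exists y, lo v <= y <= hi v /\ cball z r y)).
  - apply ext_nodup.
  - intros v Hv. destruct (ext_sound _ _ _ _ _ Hsg Hv) as [Hv1 Hv2].
    destruct (hm_point _ _ _ _ _ _ _ _ H Hn Hv1) as (y & Hy1 & Hy2).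
    destruct (hm_nest _ _ _ _ _ _ _ _ _ H Hv1) as [N1 N2]. rewrite Hv2 in N1, N2.
    pose proof (hm_len _ _ _ _ _ _ _ _ H Hsg) as Hl.
    destruct (Hcov y) as (z & Hz & Hzy).
    + split; [|apply HE; exact Hy1]. apply cball_iff. unfold delta. lra.
    + exists z. split; [exact Hz|]. exists y. split; [lra|exact Hzy].
  - intros z v1 v2 v3 I1 I2 I3 (y1 & A1 & B1) (y2 & A2 & B2) (y3 & A3 & B3) D12 D13 D23.
    destruct (ext_sound _ _ _ _ _ Hsg I1) as [W1 _].
    destruct (ext_sound _ _ _ _ _ Hsg I2) as [W2 _].
    destruct (ext_sound _ _ _ _ _ Hsg I3) as [W3 _].
    pose proof (hm_len _ _ _ _ _ _ _ _ H W1) as L1.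
    pose proof (hm_len _ _ _ _ _ _ _ _ H W2) as L2.
    pose proof (hm_len _ _ _ _ _ _ _ _ H W3) as L3.
    fold (delta a b c (k + l)) in L1, L2, L3.
    apply cball_iff in B1. apply cball_iff in B2. apply cball_iff in B3.
    pose proof (delta_pos a b c (k + l) Hab Hc).
    destruct (hm_sep _ _ _ _ _ _ _ _ _ H Hab Hc W1 W2 D12);
    destruct (hm_sep _ _ _ _ _ _ _ _ _ H Hab Hc W1 W3 D13);
    destruct (hm_sep _ _ _ _ _ _ _ _ _ H Hab Hc W2 W3 D23); lra.
Qed.

Lemma four_sep (l1 l2 l3 l4 y1 y2 y3 y4 x d R0 : R) :
  R0 < d -> 0 < d ->
  l1 <= y1 <= l1 + d -> l2 <= y2 <= l2 + d -> l3 <= y3 <= l3 + d -> l4 <= y4 <= l4 + d ->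
  x - R0 <= y1 <= x + R0 -> x - R0 <= y2 <= x + R0 -> x - R0 <= y3 <= x + R0 -> x - R0 <= y4 <= x + R0 ->
  (l1 + d <= l2 \/ l2 + d <= l1) -> (l1 + d <= l3 \/ l3 + d <= l1) -> (l1 + d <= l4 \/ l4 + d <= l1) ->
  (l2 + d <= l3 \/ l3 + d <= l2) -> (l2 + d <= l4 \/ l4 + d <= l2) -> (l3 + d <= l4 \/ l4 + d <= l3) ->
  False.
Proof.
  intros Hd Hd0 A1 A2 A3 A4 B1 B2 B3 B4 C1 C2 C3 C4 C5 C6.
  destruct C1; destruct C2; destruct C3; destruct C4; destruct C5; destruct C6; lra.
Qed.

Lemma cover_upper a b n c lo hi (E : R -> Prop) K j x R0 r :
  homogeneous_moran_structure a b n c lo hi -> a < b ->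
  (forall k, (1 <= k)%nat -> (2 <= n k)%nat) -> (forall k, (1 <= k)%nat -> 0 < c k) ->
  (forall x, E x <-> moran_set n lo hi x) -> (1 <= K)%nat ->
  R0 < delta a b c K -> delta a b c (K + j) <= 2 * r ->
  exists cs, covered_by r (fun y => cball x R0 y /\ E y) cs /\ (length cs <= 3 * prod_n n K j)%nat.
Proof.
  intros H Hab Hn Hc HE HK HR0 Hr.
  set (f := fun w => if excluded_middle_informative
        (exists y, lo w <= y <= hi w /\ cball x R0 y) then true else false).
  set (Wk := filter f (ext n [] 0 K)).
  exists (flat_map (fun w => map (fun v => (lo v + hi v) / 2) (ext n w K j)) Wk).
  split.
  - intros y [Hy HEy]. apply HE in HEy. destruct (HEy (K + j)%nat ltac:(lia)) as (v & Hv & Hyv).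
    pose proof (word_in_firstn _ _ _ _ Hv) as Hu.
    destruct (hm_nest _ _ _ _ _ _ _ _ _ H Hv) as [N1 N2].
    exists ((lo v + hi v) / 2). split.
    + apply in_flat_map. exists (firstn K v). split.
      * apply filter_In. split.
        -- apply (ext_complete n 0 K (firstn K v)). exact Hu.
        -- unfold f. destruct (excluded_middle_informative _) as [|Hno]; [reflexivity|].
           exfalso; apply Hno. exists y. split; [lra|exact Hy].
      * apply in_map_iff. exists v. split; [reflexivity|]. apply ext_complete; exact Hv.
    + apply cball_iff. pose proof (hm_len _ _ _ _ _ _ _ _ H Hv). fold (delta a b c (K + j)) in H0. lra.
  - rewrite (flat_map_len_const _ _ (prod_n n K j)).
    + apply Nat.mul_le_mono_r. apply len_le3.
      * apply NoDup_filter, ext_nodup.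
      * assert (Hw : forall w, In w Wk -> word_in n K w /\ exists y, lo w <= y <= hi w /\ cball x R0 y).
        { intros w Hw. apply filter_In in Hw as [Hw1 Hw2]. split.
          - apply (ext_sound n [] 0 K w (word_in_nil n)) in Hw1. apply Hw1.
          - unfold f in Hw2. destruct (excluded_middle_informative _); [assumption|discriminate]. }
        intros v1 v2 v3 v4 I1 I2 I3 I4 D12 D13 D14 D23 D24 D34.
        destruct (Hw v1 I1) as (W1 & y1 & A1 & B1).
        destruct (Hw v2 I2) as (W2 & y2 & A2 & B2).
        destruct (Hw v3 I3) as (W3 & y3 & A3 & B3).
        destruct (Hw v4 I4) as (W4 & y4 & A4 & B4).
        pose proof (hm_len _ _ _ _ _ _ _ _ H W1) as L1.
        pose proof (hm_len _ _ _ _ _ _ _ _ H W2) as L2.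
        pose proof (hm_len _ _ _ _ _ _ _ _ H W3) as L3.
        pose proof (hm_len _ _ _ _ _ _ _ _ H W4) as L4.
        fold (delta a b c K) in L1, L2, L3, L4.
        apply cball_iff in B1. apply cball_iff in B2. apply cball_iff in B3. apply cball_iff in B4.
        pose proof (delta_pos a b c K Hab Hc).
        apply (four_sep (lo v1) (lo v2) (lo v3) (lo v4) y1 y2 y3 y4 x (delta a b c K) R0); try lra.
        - destruct (hm_sep _ _ _ _ _ _ _ _ _ H Hab Hc W1 W2 D12) as [hh|hh]; [left|right]; lra.
        - destruct (hm_sep _ _ _ _ _ _ _ _ _ H Hab Hc W1 W3 D13) as [hh|hh]; [left|right]; lra.
        - destruct (hm_sep _ _ _ _ _ _ _ _ _ H Hab Hc W1 W4 D14) as [hh|hh]; [left|right]; lra.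
        - destruct (hm_sep _ _ _ _ _ _ _ _ _ H Hab Hc W2 W3 D23) as [hh|hh]; [left|right]; lra.
        - destruct (hm_sep _ _ _ _ _ _ _ _ _ H Hab Hc W2 W4 D24) as [hh|hh]; [left|right]; lra.
        - destruct (hm_sep _ _ _ _ _ _ _ _ _ H Hab Hc W3 W4 D34) as [hh|hh]; [left|right]; lra.

    + intros w _. rewrite length_map, ext_len. reflexivity.
Qed.

Lemma Rpower_pos x y : 0 < Rpower x y.
Proof. unfold Rpower. apply exp_pos. Qed.

Lemma cov_le r A cs : covered_by r A cs -> Rbar_le (covering_number r A) (INR (length cs)).
Proof.
  intros Hc. unfold covering_number. destruct (Glb_Rbar_correct
    (fun m => exists cs, covered_by r A cs /\ m = INR (length cs))) as [Hlb _].
  apply Hlb. exists cs; split; [exact Hc|reflexivity].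
Qed.

Lemma cov_ge r A (v : R) : (forall cs, covered_by r A cs -> v <= INR (length cs)) ->
  Rbar_le v (covering_number r A).
Proof.
  intros Hc. unfold covering_number. destruct (Glb_Rbar_correct
    (fun m => exists cs, covered_by r A cs /\ m = INR (length cs))) as [_ Hglb].
  apply Hglb. intros m (cs & Hcs & ->). simpl. apply Hc; exact Hcs.
Qed.

Lemma partB_bound a b n c lo hi (E : R -> Prop) M s b0 C :
  homogeneous_moran_structure a b n c lo hi -> a < b ->
  (forall k, (1 <= k)%nat -> (2 <= n k)%nat) -> (forall k, (1 <= k)%nat -> 0 < c k) ->
  (forall k, (1 <= k)%nat -> INR (n k) * c k < 1) ->
  (forall x, E x <-> moran_set n lo hi x) ->
  (forall k, (1 <= k)%nat -> (n k <= M)%nat) -> (1 <= M)%nat -> 0 <= s -> 0 < b0 -> 0 < C ->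
  (forall r R0 x, 0 < r -> r < R0 -> R0 < b0 -> E x ->
     Rbar_le (covering_number r (fun y => cball x R0 y /\ E y)) (Finite (C * Rpower (R0 / r) s))) ->
  exists K C2, 1 <= C2 /\ forall k l, (1 <= k)%nat -> (K <= l)%nat ->
    INR (prod_n n k l) <= C2 * Rpower (/ prod_c c k l) s.
Proof.
  intros H Hab Hn Hc Hnc HE HM HM1 Hs Hb0 HC Hass.
  pose proof (c_bound n c Hn Hc Hnc) as Hc2.
  destruct (pow_lt_1_zero (/2) ltac:(rewrite Rabs_pos_eq; lra) (b0 / (b - a))
    ltac:(apply Rdiv_lt_0_compat; lra)) as [N HN].
  set (K := S N).
  assert (HK : delta a b c K < b0).
  { pose proof (delta_le_pow a b c K Hab Hc2). specialize (HN K ltac:(unfold K; lia)).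
    rewrite Rabs_pos_eq in HN by (apply pow_le; lra).
    apply Rmult_lt_compat_l with (r := b - a) in HN; [|lra].
    replace ((b - a) * (b0 / (b - a))) with b0 in HN by (field; lra). lra. }
  exists K, (Rmax 1 (INR (M ^ K) * (2 * C * Rpower 3 s))). split; [apply Rmax_l|].
  intros k l Hk Hl.
  set (k' := Nat.max k K). set (d := (k' - k)%nat). set (l' := (l - d)%nat).
  assert (Hd : (d <= K)%nat) by (unfold d, k'; lia).
  assert (Hkd : (k + d)%nat = k') by (unfold d, k'; lia).
  assert (Hld : l = (d + l')%nat) by (unfold l'; lia).
  assert (Hsg : word_in n (0 + k') ([] ++ repeat 1%nat k')) by (apply chain_word; [exact Hn| apply word_in_nil]).
  simpl in Hsg.
  destruct (hm_point _ _ _ _ _ _ _ _ H Hn Hsg) as (x & Hxm & Hx).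
  set (q' := prod_c c k' l'). set (p' := prod_n n k' l').
  assert (Hq' : 0 < q') by (apply prod_c_pos; exact Hc).
  pose proof (delta_pos a b c k' Hab Hc) as Hdk.
  assert (Hdkl : delta a b c (k' + l') = delta a b c k' * q') by apply delta_add.
  assert (Hq1 : q' <= 1) by (apply prod_c_le1; exact Hc2).
  set (r := delta a b c (k' + l') / 3).
  assert (Hr : 0 < r) by (unfold r; rewrite Hdkl; apply Rdiv_lt_0_compat; [apply Rmult_lt_0_compat|]; lra).
  assert (HrR : r < delta a b c k') by (unfold r; rewrite Hdkl; nra).
  assert (HRb : delta a b c k' < b0).
  { apply Rle_lt_trans with (delta a b c K); [|exact HK].
    replace k' with (K + (k' - K))%nat by (unfold k'; lia). apply delta_le; assumption. }
  assert (Hlow : Rbar_le (INR p' / 2) (covering_number r (fun y => cball x (delta a b c k') y /\ E y))).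
  { apply cov_ge. intros cs Hcs.
    pose proof (cover_lower a b n c lo hi E k' l' _ x r cs H Hab Hn Hc HE Hsg Hx ltac:(unfold r; lra) Hcs) as Hp.
    apply le_INR in Hp. rewrite mult_INR in Hp. simpl in Hp. fold p' in Hp. lra. }
  pose proof (Rbar_le_trans _ _ _ Hlow (Hass r (delta a b c k') x Hr HrR HRb ltac:(apply HE; exact Hxm))) as Hp'.
  simpl in Hp'.
  replace (delta a b c k' / r) with (3 * / q') in Hp' by (unfold r; rewrite Hdkl; field; lra).
  rewrite <- Rpower_mult_distr in Hp' by (try apply Rinv_0_lt_compat; lra).
  assert (Hp : prod_n n k l = (prod_n n k d * p')%nat) by (rewrite Hld, prod_n_split, Hkd; reflexivity).
  assert (Hq : prod_c c k l = prod_c c k d * q') by (rewrite Hld, prod_c_split, Hkd; reflexivity).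
  assert (HpdM : (prod_n n k d <= M ^ K)%nat).
  { apply Nat.le_trans with (M ^ d)%nat; [apply prod_n_le; exact HM|]. apply Nat.pow_le_mono_r; lia. }
  pose proof (prod_c_pos c k d Hc) as Hqd0. pose proof (prod_c_le1 c k d Hc2) as Hqd1.
  assert (Hqq : / q' <= / prod_c c k l).
  { apply Rinv_le_contravar; rewrite Hq; [apply Rmult_lt_0_compat; lra| nra]. }
  assert (Hrp : Rpower (/ q') s <= Rpower (/ prod_c c k l) s).
  { apply Rle_Rpower_l; [exact Hs| split; [apply Rinv_0_lt_compat; lra| exact Hqq]]. }
  pose proof (Rpower_pos 3 s). pose proof (Rpower_pos (/ q') s).
  assert (HpI : INR (prod_n n k l) <= INR (M ^ K) * INR p').
  { rewrite Hp, mult_INR. apply Rmult_le_compat_r; [apply pos_INR| apply le_INR; exact HpdM]. }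
  assert (HMK : 0 <= INR (M ^ K)) by apply pos_INR.
  assert (Hmax : INR (M ^ K) * (2 * C * Rpower 3 s) <= Rmax 1 (INR (M ^ K) * (2 * C * Rpower 3 s))) by apply Rmax_r.
  pose proof (Rpower_pos (/ prod_c c k l) s).
  assert (HX : INR p' <= 2 * C * Rpower 3 s * Rpower (/ prod_c c k l) s).
  { apply Rle_trans with (2 * (C * (Rpower 3 s * Rpower (/ q') s))); [lra|].
    assert (0 < C * Rpower 3 s) by (apply Rmult_lt_0_compat; lra). nra. }
  apply Rle_trans with (INR (M ^ K) * INR p'); [exact HpI|].
  apply Rle_trans with (INR (M ^ K) * (2 * C * Rpower 3 s) * Rpower (/ prod_c c k l) s).
  - rewrite Rmult_assoc. apply Rmult_le_compat_l; [exact HMK|]. lra.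
  - apply Rmult_le_compat_r; [lra| exact Hmax].
Qed.

Lemma ln2_pos : 0 < ln 2.
Proof. rewrite <- ln_1. apply ln_increasing; lra. Qed.

Lemma neg_ln_q c k l : (forall k, (1 <= k)%nat -> 0 < c k <= /2) ->
  INR l * ln 2 <= - ln (prod_c c k l).
Proof.
  intros Hc2. pose proof (prod_c_le c k l Hc2).
  assert (0 < prod_c c k l) by (apply prod_c_pos; intros; apply Hc2; assumption).
  pose proof (ln_le _ _ H0 H). rewrite ln_pow in H1 by lra. rewrite ln_Rinv in H1 by lra. lra.
Qed.

Lemma partB_ratio n c K C2 s eps : (forall k, (1 <= k)%nat -> 0 < c k <= /2) ->
  (forall k, (1 <= k)%nat -> (2 <= n k)%nat) -> 1 <= C2 -> 0 < eps ->
  (forall k l, (1 <= k)%nat -> (K <= l)%nat -> INR (prod_n n k l) <= C2 * Rpower (/ prod_c c k l) s) ->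
  exists L0, forall k l, (1 <= k)%nat -> (L0 <= l)%nat -> ratio n c k l <= s + eps.
Proof.
  intros Hc2 Hn HC2 Heps Hb.
  pose proof ln2_pos as Hl2.
  assert (HA : 0 <= ln C2) by (rewrite <- ln_1; apply ln_le; lra).
  destruct (archimed_cor1 (eps * ln 2 / (ln C2 + 1))) as (N & HN & HN0).
  { apply Rdiv_lt_0_compat; [apply Rmult_lt_0_compat|]; lra. }
  exists (Nat.max N K). intros k l Hk Hl.
  specialize (Hb k l Hk ltac:(lia)).
  set (q := prod_c c k l) in *. set (p := prod_n n k l) in *.
  assert (Hq : 0 < q) by (apply prod_c_pos; intros; apply Hc2; assumption).
  assert (Hp : 1 <= INR p) by (apply (le_INR 1); apply prod_n_ge1; exact Hn).
  pose proof (neg_ln_q c k l Hc2) as HD. fold q in HD.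
  assert (HlN : INR N <= INR l) by (apply le_INR; lia).
  assert (HN' : 0 < INR N) by (apply (lt_INR 0); exact HN0).
  assert (HAN : ln C2 + 1 < eps * ln 2 * INR N).
  { apply Rmult_lt_compat_r with (r := INR N) in HN; [|lra].
    rewrite Rinv_l in HN by lra.
    apply Rmult_lt_compat_r with (r := ln C2 + 1) in HN; [|lra].
    replace (eps * ln 2 / (ln C2 + 1) * INR N * (ln C2 + 1)) with (eps * ln 2 * INR N) in HN by (field; lra).
    lra. }
  set (D := - ln q) in *.
  assert (HD0 : 0 < D) by nra.
  assert (Hlnp : ln (INR p) <= ln C2 + s * D).
  { apply ln_le in Hb; [|lra]. rewrite ln_mult in Hb by (try apply Rpower_pos; lra).
    rewrite ln_Rpower, ln_Rinv in Hb by lra. unfold D. lra. }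
  assert (HAD : ln C2 <= eps * D).
  { assert (eps * ln 2 * INR N <= eps * D).
    { rewrite Rmult_assoc. apply Rmult_le_compat_l; [lra|]. nra. }
    lra. }
  unfold ratio. fold p q D.
  apply Rmult_le_reg_r with D; [exact HD0|].
  unfold Rdiv. rewrite Rmult_assoc, Rinv_l by lra. lra.
Qed.

Lemma exists_step (P : nat -> Prop) m : ~ P 0%nat -> P m -> exists k, ~ P k /\ P (S k).
Proof.
  intros H0. induction m as [|m IH]; intros Hm; [contradiction|].
  destruct (classic (P m)) as [Hp|Hp]; [apply IH; exact Hp|]. exists m; split; assumption.
Qed.

Lemma delta_small a b c y : a < b -> (forall k, (1 <= k)%nat -> 0 < c k <= /2) -> 0 < y ->
  exists m, forall k, (m <= k)%nat -> delta a b c k <= y.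
Proof.
  intros Hab Hc2 Hy.
  destruct (pow_lt_1_zero (/2) ltac:(rewrite Rabs_pos_eq; lra) (y / (b - a))
    ltac:(apply Rdiv_lt_0_compat; lra)) as [N HN].
  exists N. intros k Hk. pose proof (delta_le_pow a b c k Hab Hc2). specialize (HN k Hk).
  rewrite Rabs_pos_eq in HN by (apply pow_le; lra).
  apply Rmult_lt_compat_l with (r := b - a) in HN; [|lra].
  replace ((b - a) * (y / (b - a))) with y in HN by (field; lra). lra.
Qed.

Lemma prod_bound_of_ratio n c k l s : (forall k, (1 <= k)%nat -> 0 < c k <= /2) ->
  (forall k, (1 <= k)%nat -> (2 <= n k)%nat) -> (1 <= l)%nat ->
  ratio n c k l < s -> INR (prod_n n k l) < Rpower (/ prod_c c k l) s.
Proof.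
  intros Hc2 Hn Hl Hr.
  assert (Hq : 0 < prod_c c k l) by (apply prod_c_pos; intros; apply Hc2; assumption).
  pose proof (neg_ln_q c k l Hc2) as HD. pose proof ln2_pos.
  assert (HD0 : 0 < - ln (prod_c c k l)).
  { apply (lt_INR 0) in Hl. simpl in Hl. nra. }
  assert (Hp : 1 <= INR (prod_n n k l)) by (apply (le_INR 1); apply prod_n_ge1; exact Hn).
  unfold ratio in Hr.
  assert (H1 : ln (INR (prod_n n k l)) < s * - ln (prod_c c k l)).
  { apply Rmult_lt_compat_r with (r := - ln (prod_c c k l)) in Hr; [|exact HD0].
    unfold Rdiv in Hr. rewrite Rmult_assoc, Rinv_l in Hr by lra. lra. }
  unfold Rpower. rewrite ln_Rinv by lra. rewrite <- (exp_ln (INR _)) by lra.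
  apply exp_increasing. lra.
Qed.

Lemma ratio_nonneg n c k l : (forall k, (1 <= k)%nat -> 0 < c k <= /2) ->
  (forall k, (1 <= k)%nat -> (2 <= n k)%nat) -> 0 <= ratio n c k l.
Proof.
  intros Hc2 Hn. unfold ratio.
  assert (Hq : 0 < prod_c c k l) by (apply prod_c_pos; intros; apply Hc2; assumption).
  pose proof (prod_c_le1 c k l Hc2).
  assert (0 <= - ln (prod_c c k l)).
  { assert (ln (prod_c c k l) <= 0) by (rewrite <- ln_1; apply ln_le; lra). lra. }
  assert (Hp : 1 <= INR (prod_n n k l)) by (apply (le_INR 1); apply prod_n_ge1; exact Hn).
  assert (0 <= ln (INR (prod_n n k l))) by (rewrite <- ln_1; apply ln_le; lra).
  destruct H0 as [H0|H0].
  - apply Rdiv_le_0_compat; lra.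
  - rewrite <- H0. unfold Rdiv. rewrite Rinv_0, Rmult_0_r. lra.
Qed.

Lemma prod_n_one n m : prod_n n m 1 = n (S m).
Proof. simpl. rewrite Nat.add_1_r. lia. Qed.

Lemma partA_member a b n c lo hi (E : R -> Prop) M s L :
  homogeneous_moran_structure a b n c lo hi -> a < b ->
  (forall k, (1 <= k)%nat -> (2 <= n k)%nat) -> (forall k, (1 <= k)%nat -> 0 < c k) ->
  (forall k, (1 <= k)%nat -> INR (n k) * c k < 1) ->
  (forall x, E x <-> moran_set n lo hi x) ->
  (forall k, (1 <= k)%nat -> (n k <= M)%nat) -> (1 <= M)%nat -> 0 <= s ->
  (forall k l, (1 <= k)%nat -> (L <= l)%nat -> ratio n c k l < s) ->
  exists b0 C : R, 0 < b0 /\ 0 < C /\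
      forall (r R0 x : R), 0 < r -> r < R0 -> R0 < b0 -> E x ->
        Rbar_le (covering_number r (fun y => cball x R0 y /\ E y))
                (Finite (C * Rpower (R0 / r) s)).
Proof.
  intros H Hab Hn Hc Hnc HE HM HM1 Hs HL.
  pose proof (c_bound n c Hn Hc Hnc) as Hc2.
  assert (HMp : (1 <= M ^ S (S L))%nat) by (apply (Nat.pow_le_mono_l 1 M (S (S L))) in HM1; rewrite Nat.pow_1_l in HM1; exact HM1).
  exists (delta a b c 1), (3 * INR (M ^ S (S L))). split; [apply delta_pos; assumption|].
  split. { apply (le_INR 1) in HMp. change (INR 1) with 1 in HMp. lra. }
  intros r R0 x Hr HrR HR0 _.
  destruct (delta_small a b c R0 Hab Hc2 ltac:(lra)) as [m Hm].
  destruct (exists_step (fun m => delta a b c (S m) <= R0) m) as (k0 & Hk0a & Hk0b).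
  { simpl. intro; lra. }
  { apply Hm; lia. }
  simpl in Hk0a, Hk0b. apply Rnot_le_lt in Hk0a. set (K := S k0) in *.
  destruct (delta_small a b c r Hab Hc2 Hr) as [m' Hm'].
  destruct (exists_step (fun j => delta a b c (K + j) <= r) m') as (j0 & Hj0a & Hj0b).
  { cbv beta. rewrite Nat.add_0_r. intro; lra. }
  { apply Hm'; lia. }
  cbv beta in Hj0a, Hj0b. apply Rnot_le_lt in Hj0a.
  destruct (cover_upper a b n c lo hi E K (S j0) x R0 r H Hab Hn Hc HE ltac:(unfold K; lia)
     ltac:(lra) ltac:(lra)) as (cs & Hcs & Hlen).
  eapply Rbar_le_trans; [apply cov_le; exact Hcs|]. simpl.
  apply Rle_trans with (3 * INR (prod_n n K (S j0))).
  { apply le_INR in Hlen. rewrite mult_INR in Hlen. replace (INR 3) with 3 in Hlen by (simpl; lra). lra. }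
  rewrite Rmult_assoc. apply Rmult_le_compat_l; [lra|].
  assert (HRr : 1 <= R0 / r) by (apply Rcomplements.Rle_div_r; lra).
  assert (HRp : 1 <= Rpower (R0 / r) s).
  { rewrite <- (Rpower_O (R0 / r)) by lra. apply Rle_Rpower; lra. }
  destruct (Nat.le_gt_cases j0 L) as [Hj|Hj].
  - apply Rle_trans with (INR (M ^ S (S L))); [|rewrite <- (Rmult_1_r (INR (M ^ S (S L)))) at 1; apply Rmult_le_compat_l; [apply pos_INR| exact HRp]].
    apply le_INR. apply Nat.le_trans with (M ^ S j0)%nat; [apply prod_n_le; exact HM|].
    apply Nat.pow_le_mono_r; lia.
  - set (l := (j0 - 1)%nat).
    assert (Hsplit : prod_n n K (S j0) = (n (S K) * prod_n n (S K) l * n (S K + S l))%nat).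
    { replace (S j0) with (1 + (l + 1))%nat by (unfold l; lia).
      rewrite prod_n_split, prod_n_split, !prod_n_one.
      replace (K + 1)%nat with (S K) by lia. replace (S (S K + l)) with (S K + S l)%nat by lia.
      apply Nat.mul_assoc. }
    assert (Hq : Rpower (/ prod_c c (S K) l) s <= Rpower (R0 / r) s).
    { apply Rle_Rpower_l; [exact Hs|]. pose proof (prod_c_pos c (S K) l Hc).
      split; [apply Rinv_0_lt_compat; lra|].
      pose proof (delta_add a b c (S K) l) as Hda.
      replace (S K + l)%nat with (K + j0)%nat in Hda by (unfold l; lia).
      pose proof (delta_pos a b c (S K) Hab Hc).
      assert (Hqe : / prod_c c (S K) l = delta a b c (S K) / delta a b c (K + j0)).
      { rewrite Hda. field. lra. }
      rewrite Hqe. unfold Rdiv.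
      apply Rmult_le_compat; try (left; apply Rinv_0_lt_compat); try lra.
      apply Rinv_le_contravar; lra. }
    assert (HP := prod_bound_of_ratio n c (S K) l s Hc2 Hn).
    destruct (Nat.eq_dec l 0) as [Hl0|Hl0].
    +
      assert (L = 0%nat) by (unfold l in Hl0; lia).
      rewrite Hsplit. rewrite Hl0. simpl.
      rewrite Nat.mul_1_r. apply Rle_trans with (INR (M * M)).
      * apply le_INR. apply Nat.mul_le_mono; apply HM; lia.
      * subst L. pose proof (pos_INR (M * M)). apply Rle_trans with (INR (M * M) * 1); [lra|].
        apply Rmult_le_compat; try lra. apply le_INR. simpl. lia.
    + specialize (HP ltac:(lia) (HL (S K) l ltac:(lia) ltac:(unfold l; lia))).
      assert (Hm3 : INR ((n (S K) * prod_n n (S K) l * n (S K + S l))%nat) =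
        INR (n (S K)) * INR (prod_n n (S K) l) * INR (n (S K + S l)%nat)) by (rewrite !mult_INR; reflexivity).
      rewrite Hsplit, Hm3.
      assert (HnK : INR (n (S K)) <= INR M) by (apply le_INR, HM; lia).
      assert (HnK' : INR (n (S K + S l)%nat) <= INR M) by (apply le_INR, HM; lia).
      assert (HMM : INR M * INR M <= INR (M ^ S (S L))).
      { replace (INR M * INR M) with (INR (M * M)) by (rewrite mult_INR; reflexivity). apply le_INR. simpl.
        assert (1 <= M ^ L)%nat by (apply (Nat.pow_le_mono_l 1 M L) in HM1; rewrite Nat.pow_1_l in HM1; exact HM1).
        nia. }
      pose proof (pos_INR (n (S K))). pose proof (pos_INR (n (S K + S l)%nat)).
      pose proof (pos_INR (prod_n n (S K) l)).
      apply Rle_trans with (INR M * INR M * Rpower (R0 / r) s).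
      * apply Rle_trans with (INR M * Rpower (R0 / r) s * INR M); [|lra].
        apply Rmult_le_compat; try nra.
        apply Rmult_le_compat; try nra.
      * exact HMM.
Qed.

Lemma rbar_le_eps (f : Rbar) (s : R) : (forall eps, 0 < eps -> Rbar_le f (s + eps)) -> Rbar_le f s.
Proof.
  intros H. destruct f as [t| |]; simpl.
  - destruct (Rle_dec t s) as [h|h]; [exact h|]. exfalso.
    specialize (H ((t - s) / 2) ltac:(lra)). simpl in H. lra.
  - specialize (H 1 ltac:(lra)). simpl in H. exact H.
  - exact I.
Qed.

Theorem theorem1 (n : nat -> nat) (c : nat -> R) (a b : R) (E : R -> Prop) :
  (forall k, (1 <= k)%nat -> (2 <= n k)%nat) ->
  (forall k, (1 <= k)%nat -> 0 < c k) ->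
  (forall k, (1 <= k)%nat -> INR (n k) * c k < 1) ->
  a < b ->
  in_moran_class a b n c E ->
  (exists M : nat, forall k, (1 <= k)%nat -> (n k <= M)%nat) ->
  assouad_dim E = moran_formula n c.
Proof.
  intros Hn Hc Hnc Hab (lo & hi & H & HE) (M0 & HM0).
  set (M := Nat.max M0 1).
  assert (HM : forall k, (1 <= k)%nat -> (n k <= M)%nat) by (intros k Hk; specialize (HM0 k Hk); unfold M; lia).
  assert (HM1 : (1 <= M)%nat) by (unfold M; lia).
  pose proof (c_bound n c Hn Hc Hnc) as Hc2.
  assert (Hf0 : Rbar_le 0 (moran_formula n c)).
  { unfold moran_formula. apply inf_glb. intros L.
    eapply Rbar_le_trans; [|apply (sup_ub _ 0%nat)].
    eapply Rbar_le_trans; [|apply (sup_ub _ 0%nat)].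
    simpl. apply ratio_nonneg; assumption. }
  unfold assouad_dim.
  destruct (Glb_Rbar_correct (fun s => 0 <= s /\
    exists b c : R, 0 < b /\ 0 < c /\
      forall (r R0 x : R), 0 < r -> r < R0 -> R0 < b -> E x ->
        Rbar_le (covering_number r (fun y => cball x R0 y /\ E y))
                (Finite (c * Rpower (R0 / r) s)))) as [Hlb Hglb].
  apply Rbar_le_antisym.
  -
    assert (HA : forall s : R, Rbar_lt (moran_formula n c) s -> 0 <= s /\
      exists b c : R, 0 < b /\ 0 < c /\
      forall (r R0 x : R), 0 < r -> r < R0 -> R0 < b -> E x ->
        Rbar_le (covering_number r (fun y => cball x R0 y /\ E y))
                (Finite (c * Rpower (R0 / r) s))).
    { intros s Hs.
      destruct (classic (exists L, Rbar_lt (Sup_seq (fun m => Sup_seq (fun j => Finite (ratio n c (S j) (L + m)%nat)))) s)) as [[L HL]|Hno].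
      - assert (Hr : forall k l, (1 <= k)%nat -> (L <= l)%nat -> ratio n c k l < s).
        { intros k l Hk Hl.
          assert (Hle : Rbar_le (Finite (ratio n c k l)) (Sup_seq (fun m => Sup_seq (fun j => Finite (ratio n c (S j) (L + m)%nat))))).
          { eapply Rbar_le_trans; [|apply (sup_ub _ (l - L)%nat)].
            cbv beta. replace (L + (l - L))%nat with l by lia.
            replace k with (S (k - 1)) at 1 by lia. apply (sup_ub (fun j => Finite (ratio n c (S j) l)) (k - 1)%nat). }
          exact (Rbar_le_lt_trans _ _ _ Hle HL). }
        assert (Hs0 : 0 <= s) by (pose proof (ratio_nonneg n c 1 L Hc2 Hn); specialize (Hr 1%nat L ltac:(lia) ltac:(lia)); lra).
        split; [exact Hs0|].
        eapply partA_member; eauto.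
      - exfalso. assert (Hle : Rbar_le s (moran_formula n c)).
        { unfold moran_formula. apply inf_glb. intros L. apply Rbar_not_lt_le. intro h. apply Hno. exists L. exact h. }
        exact (Rbar_lt_not_le _ _ Hs Hle). }
    destruct (moran_formula n c) as [t| |] eqn:Hf.
    + apply rbar_le_eps. intros eps Heps. apply Hlb. apply HA. simpl. lra.
    + destruct (Glb_Rbar _); simpl; exact I.
    + simpl in Hf0. contradiction.
  -
    apply Hglb. intros s (Hs0 & b0 & C & Hb0 & HC & Hass).
    destruct (partB_bound a b n c lo hi E M s b0 C H Hab Hn Hc Hnc HE HM HM1 Hs0 Hb0 HC Hass)
      as (K & C2 & HC2 & Hb).
    apply rbar_le_eps. intros eps Heps.
    destruct (partB_ratio n c K C2 s eps Hc2 Hn HC2 Heps Hb) as [L0 HL0].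
    unfold moran_formula. eapply Rbar_le_trans; [apply (inf_lb _ L0)|].
    apply sup_lub. intros m. apply sup_lub. intros j. simpl. apply HL0; lia.
Qed.
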